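(* For $n\ge1$ let $\psi_n(x)=\sum_{i\in\mathbb Z}\phi_n(x-i)^2$, $x\in\mathbb R$, where $\phi_n$ is the basic limit function of $S_n$. Then $\psi_n$ is positive, symmetric ($\psi_n(-x)=\psi_n(x)$), and periodic with period $1$. Moreover $\int_0^1\psi_n(x)\,dx$ is of order $1/n$, i.e. $\int_0^1\psi_n(x)\,dx\sim 1/n$, and there is a real constant $C$, independent of $n$, such that $\|\psi_n\|_\infty\le C/n$ for all $n\ge1$.
   Context: For an integer $n\ge1$, the subdivision scheme $S_n$ acts on real sequences $\mathbf f^k=(f^k_i)_{i\in\mathbb Z}$ (the value $f^k_i$ being associated with the dyadic point $2^{-k}i$) by the refinement rules $$f^{k+1}_{2i}=\frac1{2n-1}\sum_{j=-n+1}^{n-1}f^k_{i+j},\qquad f^{k+1}_{2i+1}=\frac1{2n}\sum_{j=-n+1}^{n}f^k_{i+j}.$$ This scheme is convergent (for bounded initial data the values $f^k_i$ converge uniformly to $F(2^{-k}i)$ for a continuous $F$). The basic limit function $\phi_n$ is the limit function generated from $\delta$ ($\delta_0=1$, $\delta_i=0$ otherwise); it is continuous and supported in $[-2n+1,2n-1]$, so the sum defining $\psi_n$ is finite. *)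

(* Defs.v *)
From Stdlib Require Import Reals ZArith Lia Lra.
From Coquelicot Require Import Coquelicot.
Open Scope R_scope.

Fixpoint sum_up (m : nat) (g : nat -> R) : R :=
  match m with
  | O => 0
  | S m' => sum_up m' g + g m'
  end.

Definition sumZ (a b : Z) (g : Z -> R) : R :=
  sum_up (Z.to_nat (b - a + 1)) (fun k => g (a + Z.of_nat k)%Z).

(* One step of the scheme S_n: index j of the new sequence, with
   j = 2i (even) or j = 2i+1 (odd); in both cases i = floor(j/2). *)
Definition refine_step (n : nat) (f : Z -> R) : Z -> R :=
  fun j =>
    let i := (j / 2)%Z in
    let nz := Z.of_nat n in
    if Z.even j
    then / (2 * INR n - 1) * sumZ (- nz + 1) (nz - 1) (fun l => f (i + l)%Z)
    else / (2 * INR n) * sumZ (- nz + 1) nz (fun l => f (i + l)%Z).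

Definition delta (i : Z) : R := if Z.eqb i 0 then 1 else 0.

Fixpoint subdiv (n k : nat) : Z -> R :=
  match k with
  | O => delta
  | S k' => refine_step n (subdiv n k')
  end.

Definition is_basic_limit (n : nat) (F : R -> R) : Prop :=
  (forall x, continuous F x) /\
  forall eps, 0 < eps -> exists K : nat, forall k, (K <= k)%nat ->
    forall i : Z, Rabs (subdiv n k i - F (IZR i / 2 ^ k)) < eps.

(* psi(x) = sum_{i in Z} F(x - i)^2, written as a series over nat:
   index k contributes i = k and i = -(k+1). *)
Definition psi (F : R -> R) (x : R) : R :=
  Series (fun k : nat => (F (x - INR k))^2 + (F (x + INR k + 1))^2).

(* Main.v *)
Require Import Defs.
From Stdlib Require Import Reals ZArith Lia Lra.
From Coquelicot Require Import Coquelicot.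
Open Scope R_scope.


Lemma sum_up_ext m f g : (forall k, (k < m)%nat -> f k = g k) -> sum_up m f = sum_up m g.
Proof. induction m; simpl; intros H; auto. rewrite IHm by (intros; apply H; lia). rewrite H by lia. auto. Qed.

Lemma sum_up_front m g : sum_up (S m) g = g 0%nat + sum_up m (fun k => g (S k)).
Proof. induction m; simpl in *. ring. rewrite IHm. ring. Qed.

Lemma sum_up_plus m f g : sum_up m (fun k => f k + g k) = sum_up m f + sum_up m g.
Proof. induction m; simpl; [ring|rewrite IHm; ring]. Qed.

Lemma sum_up_scal m c f : sum_up m (fun k => c * f k) = c * sum_up m f.
Proof. induction m; simpl; [ring|rewrite IHm; ring]. Qed.

Lemma sum_up_const m c : sum_up m (fun _ => c) = INR m * c.
Proof. induction m; simpl sum_up. simpl; ring. rewrite IHm, S_INR; ring. Qed.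

Lemma sum_up_swap m p (F : nat -> nat -> R) :
  sum_up m (fun a => sum_up p (fun b => F a b)) = sum_up p (fun b => sum_up m (fun a => F a b)).
Proof. induction m; simpl. induction p; simpl; [auto|rewrite <- IHp; ring].
  rewrite IHm. rewrite <- sum_up_plus. auto. Qed.

Lemma sum_up_rev m F : sum_up m (fun k => F (m - 1 - k)%nat) = sum_up m F.
Proof. induction m in F |- *. auto. rewrite (sum_up_front m F). simpl sum_up at 1.
  replace (S m - 1 - m)%nat with 0%nat by lia. rewrite Rplus_comm. f_equal.
  - f_equal; lia.
  - rewrite <- (IHm (fun k => F (S k))). apply sum_up_ext. intros; f_equal; lia.
Qed.

Lemma sum_up_le m f g : (forall k, (k < m)%nat -> f k <= g k) -> sum_up m f <= sum_up m g.
Proof. induction m; simpl; intros H. lra. apply Rplus_le_compat; auto. Qed.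

Lemma sum_up_nonneg m f : (forall k, (k < m)%nat -> 0 <= f k) -> 0 <= sum_up m f.
Proof. intros H. replace 0 with (sum_up m (fun _ => 0)). apply sum_up_le; auto.
  rewrite sum_up_const; ring. Qed.

Lemma sum_up_CS m g : (sum_up m g)^2 <= INR m * sum_up m (fun k => (g k)^2).
Proof. induction m; cbn [sum_up]. simpl; lra. rewrite S_INR.
  set (S := sum_up m g) in *. set (Q := sum_up m (fun k => g k ^ 2)) in *.
  assert (HQ : 0 <= Q) by (apply sum_up_nonneg; intros; apply pow2_ge_0).
  destruct (Rle_lt_or_eq_dec 0 (INR m) (pos_INR m)) as [Hm|Hm].
  - assert (H2 : 2 * INR m * S * g m <= INR m ^2 * g m ^ 2 + S^2) by (pose proof (pow2_ge_0 (INR m * g m - S)); nra).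
    assert (2 * S * g m <= INR m * g m ^2 + Q).
    { apply Rmult_le_reg_l with (INR m); auto. nra. }
    nra.
  - rewrite <- Hm in *. assert (HS : S = 0) by nra. rewrite HS. nra.
Qed.

Lemma sumZ_Sr a b g : (a <= b+1)%Z -> sumZ a (b+1) g = sumZ a b g + g (b+1)%Z.
Proof. intros H. unfold sumZ.
  replace (Z.to_nat (b + 1 - a + 1)) with (S (Z.to_nat (b - a + 1))) by lia.
  cbn [sum_up]. f_equal. f_equal. lia. Qed.

Lemma sumZ_Sl a b g : (a <= b+1)%Z -> sumZ (a-1) b g = g (a-1)%Z + sumZ a b g.
Proof. intros H. unfold sumZ.
  replace (Z.to_nat (b - (a-1) + 1)) with (S (Z.to_nat (b - a + 1))) by lia.
  rewrite sum_up_front. f_equal. f_equal. lia. apply sum_up_ext. intros. f_equal. lia. Qed.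

Lemma sumZ_empty a b g : (b < a)%Z -> sumZ a b g = 0.
Proof. intros H. unfold sumZ. replace (Z.to_nat (b - a + 1)) with 0%nat by lia. reflexivity. Qed.

Lemma sumZ_single a g : sumZ a a g = g a.
Proof. unfold sumZ. replace (Z.to_nat (a - a + 1)) with 1%nat by lia. simpl. rewrite Z.add_0_r. ring. Qed.

Lemma sumZ_ext a b f g : (forall j, (a <= j <= b)%Z -> f j = g j) -> sumZ a b f = sumZ a b g.
Proof. intros H. unfold sumZ. apply sum_up_ext. intros. apply H. lia. Qed.

Lemma sumZ_shift a b c g : sumZ a b (fun j => g (j + c)%Z) = sumZ (a+c) (b+c) g.
Proof. unfold sumZ. replace (b + c - (a + c) + 1)%Z with (b - a + 1)%Z by lia.
  apply sum_up_ext. intros. f_equal. lia. Qed.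

Lemma sumZ_rev a b g : sumZ a b (fun j => g (- j)%Z) = sumZ (-b) (-a) g.
Proof. unfold sumZ. replace (- a - - b + 1)%Z with (b - a + 1)%Z by lia.
  rewrite <- sum_up_rev. apply sum_up_ext. intros. f_equal. lia. Qed.

Lemma sumZ_scal a b c g : sumZ a b (fun j => c * g j) = c * sumZ a b g.
Proof. unfold sumZ. apply sum_up_scal. Qed.

Lemma sumZ_plus a b f g : sumZ a b (fun j => f j + g j) = sumZ a b f + sumZ a b g.
Proof. unfold sumZ. apply sum_up_plus. Qed.

Lemma sumZ_const a b c : sumZ a b (fun _ => c) = INR (Z.to_nat (b - a + 1)) * c.
Proof. unfold sumZ. apply sum_up_const. Qed.

Lemma sumZ_swap a b c d (F : Z -> Z -> R) :
  sumZ a b (fun j => sumZ c d (fun l => F j l)) = sumZ c d (fun l => sumZ a b (fun j => F j l)).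
Proof. unfold sumZ. apply sum_up_swap. Qed.

Lemma sumZ_le a b f g : (forall j, (a <= j <= b)%Z -> f j <= g j) -> sumZ a b f <= sumZ a b g.
Proof. intros H. unfold sumZ. apply sum_up_le. intros. apply H. lia. Qed.

Lemma sumZ_nonneg a b f : (forall j, (a <= j <= b)%Z -> 0 <= f j) -> 0 <= sumZ a b f.
Proof. intros H. unfold sumZ. apply sum_up_nonneg. intros. apply H. lia. Qed.

Lemma sumZ_CS a b g : (sumZ a b g)^2 <= INR (Z.to_nat (b - a + 1)) * sumZ a b (fun j => (g j)^2).
Proof. unfold sumZ. apply sum_up_CS. Qed.

Lemma sumZ_ext_r a b g : (a <= b+1)%Z -> forall d : nat,
  (forall j, (b < j <= b + Z.of_nat d)%Z -> g j = 0) -> sumZ a (b + Z.of_nat d) g = sumZ a b g.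
Proof. intros H d. induction d; intros Hz.
  - simpl. rewrite Z.add_0_r. auto.
  - replace (b + Z.of_nat (S d))%Z with (b + Z.of_nat d + 1)%Z by lia.
    rewrite sumZ_Sr by lia. rewrite IHd by (intros; apply Hz; lia). rewrite Hz by lia. ring. Qed.

Lemma sumZ_ext_l a b g : (a <= b+1)%Z -> forall d : nat,
  (forall j, (a - Z.of_nat d <= j < a)%Z -> g j = 0) -> sumZ (a - Z.of_nat d) b g = sumZ a b g.
Proof. intros H d. induction d; intros Hz.
  - simpl. rewrite Z.sub_0_r. auto.
  - replace (a - Z.of_nat (S d))%Z with (a - Z.of_nat d - 1)%Z by lia.
    rewrite sumZ_Sl by lia. rewrite IHd by (intros; apply Hz; lia). rewrite Hz by lia. ring. Qed.

Lemma sumZ_zero_ext a b a' b' g : (a' <= a)%Z -> (b <= b')%Z -> (a <= b+1)%Z ->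
  (forall j, (j < a \/ b < j)%Z -> g j = 0) -> sumZ a' b' g = sumZ a b g.
Proof. intros H1 H2 H3 Hz.
  assert (E1 : a' = (a - Z.of_nat (Z.to_nat (a - a')))%Z) by lia.
  assert (E2 : b' = (b + Z.of_nat (Z.to_nat (b' - b)))%Z) by lia.
  rewrite E1. rewrite sumZ_ext_l.
  - rewrite E2. rewrite sumZ_ext_r; auto. intros; apply Hz; lia.
  - lia.
  - intros; apply Hz; lia.
Qed.

Lemma cnt_even n : (1 <= n)%nat ->
  INR (Z.to_nat (Z.of_nat n - 1 - (- Z.of_nat n + 1) + 1)) = 2 * INR n - 1.
Proof. intros H. replace (Z.to_nat (Z.of_nat n - 1 - (- Z.of_nat n + 1) + 1)) with (2*n-1)%nat by lia.
  rewrite minus_INR by lia. rewrite mult_INR. simpl. ring. Qed.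

Lemma cnt_odd n : (1 <= n)%nat ->
  INR (Z.to_nat (Z.of_nat n - (- Z.of_nat n + 1) + 1)) = 2 * INR n.
Proof. intros H. replace (Z.to_nat (Z.of_nat n - (- Z.of_nat n + 1) + 1)) with (2*n)%nat by lia.
  rewrite mult_INR. simpl. ring. Qed.

Lemma INR_ge1 n : (1 <= n)%nat -> 1 <= INR n.
Proof. intros H. apply le_INR in H. simpl in H. auto. Qed.

Lemma refine_nonneg n f j : (1 <= n)%nat -> (forall i, 0 <= f i) -> 0 <= refine_step n f j.
Proof. intros Hn Hf. pose proof (INR_ge1 n Hn). unfold refine_step. destruct (Z.even j).
  - apply Rmult_le_pos. left; apply Rinv_0_lt_compat; lra. apply sumZ_nonneg; auto.
  - apply Rmult_le_pos. left; apply Rinv_0_lt_compat; lra. apply sumZ_nonneg; auto. Qed.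

Lemma refine_le n f j M : (1 <= n)%nat -> (forall i, 0 <= f i <= M) -> refine_step n f j <= M.
Proof. intros Hn Hf. pose proof (INR_ge1 n Hn). unfold refine_step. destruct (Z.even j).
  - eapply Rle_trans. apply Rmult_le_compat_l. left; apply Rinv_0_lt_compat; lra.
    apply sumZ_le with (g := fun _ => M). intros; apply Hf.
    rewrite sumZ_const, cnt_even by auto. right. field. lra.
  - eapply Rle_trans. apply Rmult_le_compat_l. left; apply Rinv_0_lt_compat; lra.
    apply sumZ_le with (g := fun _ => M). intros; apply Hf.
    rewrite sumZ_const, cnt_odd by auto. right. field. lra. Qed.

Lemma delta_nonneg i : 0 <= delta i.
Proof. unfold delta. destruct (Z.eqb i 0); lra. Qed.

Lemma delta_le1 i : delta i <= 1.
Proof. unfold delta. destruct (Z.eqb i 0); lra. Qed.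

Lemma delta_window a b : sumZ a b delta <= 1.
Proof. destruct (Z_le_dec a 0); destruct (Z_le_dec 0 b).
  - rewrite (sumZ_zero_ext 0 0); try lia.
    2:{ intros j Hj; unfold delta; destruct (Z.eqb_spec j 0); [lia|reflexivity]. }
    rewrite sumZ_single. apply delta_le1.
  - rewrite (sumZ_ext _ _ _ (fun _ => 0)). rewrite sumZ_const, Rmult_0_r; lra.
    intros; unfold delta; destruct (Z.eqb_spec j 0); lia || lra.
  - rewrite (sumZ_ext _ _ _ (fun _ => 0)). rewrite sumZ_const, Rmult_0_r; lra.
    intros; unfold delta; destruct (Z.eqb_spec j 0); lia || lra.
  - rewrite (sumZ_ext _ _ _ (fun _ => 0)). rewrite sumZ_const, Rmult_0_r; lra.
    intros; unfold delta; destruct (Z.eqb_spec j 0); lia || lra.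
Qed.

Lemma delta_window' a b c : sumZ a b (fun l => delta (c + l)%Z) <= 1.
Proof. rewrite (sumZ_ext _ _ _ (fun l => delta (l + c)%Z)). rewrite sumZ_shift. apply delta_window.
  intros; f_equal; lia. Qed.

Lemma sub_nonneg n k i : (1 <= n)%nat -> 0 <= subdiv n k i.
Proof. intros Hn. induction k in i |- *; simpl. apply delta_nonneg. apply refine_nonneg; auto. Qed.

Lemma sub_le1 n k i : (1 <= n)%nat -> subdiv n k i <= 1.
Proof. intros Hn. induction k in i |- *; simpl. apply delta_le1.
  apply refine_le; auto. intros; split; auto using sub_nonneg. Qed.

Lemma sub_le n k i : (1 <= n)%nat -> (1 <= k)%nat -> subdiv n k i <= / (2 * INR n - 1).
Proof. intros Hn Hk. pose proof (INR_ge1 n Hn). induction k in i, Hk |- *. lia.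
  destruct k.
  - simpl. unfold refine_step. destruct (Z.even i).
    + rewrite <- (Rmult_1_r (/ _)) at 2. apply Rmult_le_compat_l.
      left; apply Rinv_0_lt_compat; lra. apply delta_window'.
    + apply Rle_trans with (/ (2 * INR n) * 1).
      apply Rmult_le_compat_l. left; apply Rinv_0_lt_compat; lra. apply delta_window'.
      rewrite Rmult_1_r. apply Rinv_le_contravar; lra.
  - change (subdiv n (S (S k)) i) with (refine_step n (subdiv n (S k)) i).
    apply refine_le; auto. intros; split; auto using sub_nonneg. apply IHk; lia. Qed.

Lemma Zdecomp j : exists q, (j = q*2 \/ j = q*2+1)%Z.
Proof. exists (j/2)%Z. pose proof (Z.div_mod j 2). pose proof (Z.mod_pos_bound j 2). lia. Qed.

Lemma div_even q : ((q*2)/2 = q)%Z.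
Proof. apply Z.div_mul; lia. Qed.
Lemma div_odd q : ((q*2+1)/2 = q)%Z.
Proof. rewrite Z.div_add_l by lia. rewrite (Z.div_small 1 2) by lia. ring. Qed.
Lemma even_even q : Z.even (q*2) = true.
Proof. rewrite Z.even_mul. rewrite Bool.orb_true_r. reflexivity. Qed.
Lemma even_odd q : Z.even (q*2+1) = false.
Proof. rewrite Z.even_add, even_even. reflexivity. Qed.

Lemma refine_even n f q : refine_step n f (q*2)%Z =
  / (2 * INR n - 1) * sumZ (- Z.of_nat n + 1) (Z.of_nat n - 1) (fun l => f (q + l)%Z).
Proof. unfold refine_step. rewrite even_even, div_even. reflexivity. Qed.
Lemma refine_odd n f q : refine_step n f (q*2+1)%Z =
  / (2 * INR n) * sumZ (- Z.of_nat n + 1) (Z.of_nat n) (fun l => f (q + l)%Z).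
Proof. unfold refine_step. rewrite even_odd, div_odd. reflexivity. Qed.

Lemma pow2S k : (2 ^ Z.of_nat (S k) = 2 * 2 ^ Z.of_nat k)%Z.
Proof. rewrite Nat2Z.inj_succ, Z.pow_succ_r by lia. ring. Qed.

Lemma pow2pos k : (1 <= 2 ^ Z.of_nat k)%Z.
Proof. induction k. simpl; lia. rewrite pow2S. lia. Qed.

Lemma sumZ_zero a b g : (forall j, (a <= j <= b)%Z -> g j = 0) -> sumZ a b g = 0.
Proof. intros H. rewrite (sumZ_ext _ _ _ (fun _ => 0)) by auto. rewrite sumZ_const; ring. Qed.

Lemma sub_supp n k i : (1 <= n)%nat ->
  (Z.abs i > 2 * Z.of_nat n * (2 ^ Z.of_nat k - 1))%Z -> subdiv n k i = 0.
Proof. intros Hn. induction k in i |- *; intros Hi.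
  - simpl in *. unfold delta. destruct (Z.eqb_spec i 0); lia || reflexivity.
  - change (subdiv n (S k) i) with (refine_step n (subdiv n k) i).
    rewrite pow2S in Hi. pose proof (pow2pos k). set (P := (2 ^ Z.of_nat k)%Z) in *.
    set (nz := Z.of_nat n) in *.
    assert (Hn' : (1 <= nz)%Z) by lia.
    set (Q := (nz * P)%Z).
    assert (HiQ : (Z.abs i > 4 * Q - 2 * nz)%Z) by (unfold Q; lia).
    destruct (Zdecomp i) as [q [E|E]]; subst i.
    + rewrite refine_even. rewrite sumZ_zero. ring. intros l Hl. apply IHk.
      fold nz P. assert (2 * nz * (P - 1) = 2 * Q - 2 * nz)%Z by (unfold Q; ring). lia.
    + rewrite refine_odd. rewrite sumZ_zero. ring. intros l Hl. apply IHk.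
      fold nz P. assert (2 * nz * (P - 1) = 2 * Q - 2 * nz)%Z by (unfold Q; ring). lia.
Qed.

Lemma sub_sym n k i : subdiv n k (- i) = subdiv n k i.
Proof. induction k in i |- *.
  - simpl. unfold delta. destruct (Z.eqb_spec (-i) 0), (Z.eqb_spec i 0); lia || reflexivity.
  - change (subdiv n (S k) ?x) with (refine_step n (subdiv n k) x).
    destruct (Zdecomp i) as [q [E|E]]; subst i.
    + replace (- (q*2))%Z with ((-q)*2)%Z by ring. rewrite !refine_even. f_equal.
      rewrite (sumZ_ext _ _ _ (fun l => subdiv n k (q + - l)%Z)).
      2:{ intros. rewrite <- IHk. f_equal. lia. }
      rewrite (sumZ_rev _ _ (fun l => subdiv n k (q + l)%Z)).
      f_equal; lia.
    + replace (- (q*2+1))%Z with ((-q-1)*2+1)%Z by ring. rewrite !refine_odd. f_equal.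
      rewrite (sumZ_ext _ _ _ (fun l => subdiv n k (q + 1 + - l)%Z)).
      2:{ intros. rewrite <- IHk. f_equal. lia. }
      rewrite (sumZ_rev _ _ (fun l => subdiv n k (q + 1 + l)%Z)).
      rewrite (sumZ_ext _ _ _ (fun l => subdiv n k (q + (l + 1))%Z)).
      2:{ intros. f_equal. lia. }
      rewrite (sumZ_shift _ _ 1 (fun l => subdiv n k (q + l)%Z)).
      f_equal; lia.
Qed.

Lemma part n k : (1 <= n)%nat -> forall i J, (0 <= J)%Z ->
  (forall j, (Z.abs j > J)%Z -> subdiv n k (i - 2 ^ Z.of_nat k * j)%Z = 0) ->
  sumZ (- J) J (fun j => subdiv n k (i - 2 ^ Z.of_nat k * j)%Z) = 1.
Proof. intros Hn. pose proof (INR_ge1 n Hn). induction k; intros i J HJ Hz.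
  - assert (E0 : forall j, subdiv n 0 (i - 2 ^ Z.of_nat 0 * j)%Z = delta (i - j)%Z).
    { intros j. cbn [subdiv]. change (2 ^ Z.of_nat 0)%Z with 1%Z. f_equal. lia. }
    assert (Hi : (Z.abs i <= J)%Z).
    { destruct (Z_le_dec (Z.abs i) J); auto. exfalso. specialize (Hz i ltac:(lia)).
      rewrite E0 in Hz. unfold delta in Hz. rewrite Z.sub_diag in Hz. simpl in Hz. lra. }
    rewrite (sumZ_ext _ _ _ (fun j => delta (i - j)%Z)) by (intros; apply E0).
    rewrite (sumZ_zero_ext i i); try lia.
    + rewrite sumZ_single. unfold delta. rewrite Z.sub_diag. reflexivity.
    + intros j Hj. unfold delta. destruct (Z.eqb_spec (i - j) 0); lia || reflexivity.
  - pose proof (pow2pos k). set (P := (2 ^ Z.of_nat k)%Z) in *.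
    set (nz := Z.of_nat n) in *.
    destruct (Zdecomp i) as [q [e|e]];
    set (J' := Z.max J (Z.abs q + 3 * nz));
    rewrite <- (sumZ_zero_ext (-J) J (-J') J') by (try lia; intros j Hj; apply Hz; lia);
    assert (Hsub : forall l, (Z.abs l <= nz)%Z -> sumZ (- J') J' (fun j => subdiv n k (q + l - P * j)%Z) = 1)
      by (intros l Hl; apply IHk; [lia|]; intros j Hj; apply sub_supp; auto;
          fold nz P; assert (HPj : (P * Z.abs j >= P * (Z.abs q + 3 * nz + 1))%Z) by
            (apply Z.le_ge, Z.mul_le_mono_nonneg_l; lia);
          assert (HPq : (P * Z.abs q >= Z.abs q)%Z) by nia;
          assert (Z.abs (P * j) = P * Z.abs j)%Z by (rewrite Z.abs_mul; f_equal; lia);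
          nia).
    + rewrite (sumZ_ext _ _ _ (fun j => / (2 * INR n - 1) * sumZ (- nz + 1) (nz - 1) (fun l => subdiv n k (q + l - P * j)%Z))).
      2:{ intros j Hj. change (subdiv n (S k) ?x) with (refine_step n (subdiv n k) x).
          rewrite pow2S. fold P. replace (i - 2 * P * j)%Z with ((q - P * j) * 2)%Z by lia.
          rewrite refine_even. f_equal. apply sumZ_ext. intros; f_equal; lia. }
      rewrite sumZ_scal, sumZ_swap.
      rewrite (sumZ_ext _ _ _ (fun _ => 1)). rewrite sumZ_const. unfold nz; rewrite cnt_even by auto.
      field. lra. intros l Hl. apply Hsub. lia.
    + rewrite (sumZ_ext _ _ _ (fun j => / (2 * INR n) * sumZ (- nz + 1) nz (fun l => subdiv n k (q + l - P * j)%Z))).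
      2:{ intros j Hj. change (subdiv n (S k) ?x) with (refine_step n (subdiv n k) x).
          rewrite pow2S. fold P. replace (i - 2 * P * j)%Z with ((q - P * j) * 2 + 1)%Z by lia.
          rewrite refine_odd. f_equal. apply sumZ_ext. intros; f_equal; lia. }
      rewrite sumZ_scal, sumZ_swap.
      rewrite (sumZ_ext _ _ _ (fun _ => 1)). rewrite sumZ_const. unfold nz; rewrite cnt_odd by auto.
      field. lra. intros l Hl. apply Hsub. lia.
Qed.

Lemma cont_eps (f : R -> R) y : continuous f y -> forall eps, 0 < eps ->
  exists d, 0 < d /\ forall z, Rabs (z - y) < d -> Rabs (f z - f y) < eps.
Proof. intros Hc eps He. apply continuity_pt_filterlim in Hc.
  destruct (Hc eps He) as [d [Hd H]]. exists d. split; auto. intros z Hz.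
  destruct (Req_dec z y) as [->|Hne]. rewrite Rminus_diag, Rabs_R0; auto.
  apply (H z). split. split; [exact I|auto]. exact Hz. Qed.

Lemma INR_lt_pow2 N : INR N < 2 ^ N.
Proof. induction N. simpl; lra. rewrite S_INR. simpl. assert (1 <= 2 ^ N) by (apply pow_R1_Rle; lra). lra. Qed.

Lemma approx n phi : is_basic_limit n phi -> forall y eps, 0 < eps -> exists K, forall k, (K <= k)%nat ->
  forall i, Rabs (y - IZR i / 2 ^ k) <= / 2 ^ k -> Rabs (phi y - subdiv n k i) < eps.
Proof. intros [Hc Hu] y eps He.
  destruct (cont_eps phi y (Hc y) (eps/2)) as [d [Hd Hcd]]. lra.
  destruct (Hu (eps/2)) as [K1 HK1]. lra.
  destruct (INR_unbounded (/ d)) as [N HN].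
  exists (Nat.max K1 N). intros k Hk i Hi.
  assert (Hp : / 2 ^ k < d).
  { assert (INR N <= INR k) by (apply le_INR; lia). pose proof (INR_lt_pow2 k).
    assert (/ d < 2 ^ k) by lra.
    apply Rinv_lt_contravar in H1. rewrite Rinv_inv in H1. auto.
    apply Rmult_lt_0_compat. apply Rinv_0_lt_compat; auto. apply pow_lt; lra. }
  specialize (Hcd (IZR i / 2 ^ k)). specialize (HK1 k ltac:(lia) i).
  assert (Rabs (IZR i / 2 ^ k - y) < d). { rewrite Rabs_minus_sym. lra. }
  specialize (Hcd H).
  replace (phi y - subdiv n k i) with ((phi (IZR i / 2 ^ k) - subdiv n k i) + - (phi (IZR i / 2 ^ k) - phi y) ) by ring.
  eapply Rle_lt_trans. apply Rabs_triang. rewrite Rabs_Ropp. rewrite Rabs_minus_sym in HK1. lra. Qed.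

Lemma pow2_IZR k : 2 ^ k = IZR (2 ^ Z.of_nat k).
Proof. apply pow_IZR. Qed.

Lemma floor_prop y k : IZR (Int_part (y * 2 ^ k)) <= y * 2 ^ k < IZR (Int_part (y * 2 ^ k)) + 1 /\
  Rabs (y - IZR (Int_part (y * 2 ^ k)) / 2 ^ k) <= / 2 ^ k.
Proof. destruct (base_Int_part (y * 2 ^ k)) as [H1 H2]. set (i := Int_part (y * 2 ^ k)) in *.
  assert (Hp : 0 < 2 ^ k) by (apply pow_lt; lra).
  split. lra.
  replace (y - IZR i / 2 ^ k) with ((y * 2 ^ k - IZR i) * / 2 ^ k) by (field; lra).
  rewrite Rabs_mult, Rabs_right. rewrite Rabs_right by (left; apply Rinv_0_lt_compat; lra).
  rewrite <- (Rmult_1_l (/ 2 ^ k)) at 2. apply Rmult_le_compat_r. left; apply Rinv_0_lt_compat; lra. lra.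
  lra. Qed.

Lemma small_zero a : (forall eps, 0 < eps -> Rabs a < eps) -> a = 0.
Proof. intros H. destruct (Req_dec a 0); auto. specialize (H (Rabs a) (Rabs_pos_lt a H0)). lra. Qed.

Lemma close n phi y k0 eps : is_basic_limit n phi -> 0 < eps -> exists k, (k0 <= k)%nat /\
  Rabs (phi y - subdiv n k (Int_part (y * 2 ^ k))) < eps.
Proof. intros Hb He. destruct (approx n phi Hb y eps He) as [K HK].
  exists (Nat.max K k0). split. lia. apply HK. lia. apply floor_prop. Qed.

Lemma phi_nonneg n phi y : (1 <= n)%nat -> is_basic_limit n phi -> 0 <= phi y.
Proof. intros Hn Hb. destruct (Rle_dec 0 (phi y)) as [H|H]; auto. exfalso.
  destruct (close n phi y 0 (- phi y) Hb) as [k [_ Hk]]. lra.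
  pose proof (sub_nonneg n k (Int_part (y * 2 ^ k)) Hn).
  rewrite Rabs_left1 in Hk; lra. Qed.

Lemma phi_le n phi y : (1 <= n)%nat -> is_basic_limit n phi -> phi y <= / (2 * INR n - 1).
Proof. intros Hn Hb. destruct (Rle_dec (phi y) (/ (2 * INR n - 1))) as [H|H]; auto. exfalso.
  destruct (close n phi y 1 (phi y - / (2 * INR n - 1)) Hb) as [k [Hk1 Hk]]. lra.
  pose proof (sub_le n k (Int_part (y * 2 ^ k)) Hn Hk1).
  rewrite Rabs_right in Hk; lra. Qed.

Lemma phi_supp n phi y : (1 <= n)%nat -> is_basic_limit n phi -> 2 * INR n <= Rabs y -> phi y = 0.
Proof. intros Hn Hb Hy. apply small_zero. intros eps He.
  destruct (close n phi y 0 eps Hb He) as [k [_ Hk]].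
  rewrite sub_supp in Hk; auto. rewrite Rminus_0_r in Hk; auto.
  destruct (floor_prop y k) as [[H1 H2] _]. set (i := Int_part (y * 2 ^ k)) in *.
  rewrite pow2_IZR in *. set (P := (2 ^ Z.of_nat k)%Z) in *. pose proof (pow2pos k). fold P in H.
  assert (HP : 1 <= IZR P) by (apply IZR_le; lia).
  rewrite INR_IZR_INZ in Hy. set (nz := Z.of_nat n) in *.
  destruct (Rle_dec 0 y).
  - rewrite Rabs_right in Hy by lra.
    assert (IZR (2 * nz * P - 1) < IZR i). { rewrite minus_IZR, !mult_IZR. nra. }
    apply lt_IZR in H0. nia.
  - rewrite Rabs_left in Hy by lra.
    assert (IZR i <= IZR (- (2 * nz * P))). { rewrite opp_IZR, !mult_IZR. nra. }
    apply le_IZR in H0. nia.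
Qed.

Lemma phi_sym n phi y : is_basic_limit n phi -> phi (- y) = phi y.
Proof. intros Hb. apply Rminus_diag_uniq. apply small_zero. intros eps He.
  destruct (approx n phi Hb (- y) (eps/2)) as [K1 HK1]. lra.
  destruct (approx n phi Hb y (eps/2)) as [K2 HK2]. lra.
  set (k := Nat.max K1 K2). destruct (floor_prop y k) as [_ Hf].
  set (i := Int_part (y * 2 ^ k)) in *.
  specialize (HK2 k ltac:(unfold k; lia) i Hf).
  specialize (HK1 k ltac:(unfold k; lia) (- i)%Z).
  rewrite sub_sym in HK1. 
  assert (Rabs (- y - IZR (- i) / 2 ^ k) <= / 2 ^ k).
  { rewrite opp_IZR. replace (- y - - IZR i / 2 ^ k) with (- (y - IZR i / 2 ^ k)) by (field; apply pow_nonzero; lra).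
    rewrite Rabs_Ropp. auto. }
  specialize (HK1 H).
  replace (phi (- y) - phi y) with ((phi (-y) - subdiv n k i) - (phi y - subdiv n k i)) by ring.
  eapply Rle_lt_trans. apply Rabs_triang. rewrite Rabs_Ropp. lra. Qed.

Lemma sum_up_approx m (A : nat -> nat -> R) (B : nat -> R) :
  (forall t, (t < m)%nat -> forall eps, 0 < eps -> exists K, forall k, (K <= k)%nat -> Rabs (A k t - B t) < eps) ->
  forall eps, 0 < eps -> exists K, forall k, (K <= k)%nat -> Rabs (sum_up m (A k) - sum_up m B) < eps.
Proof. induction m; intros H eps He.
  - exists 0%nat. intros. simpl. rewrite Rminus_0_r, Rabs_R0. auto.
  - destruct (IHm (fun t Ht => H t ltac:(lia)) (eps/2)) as [K1 HK1]. lra.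
    destruct (H m ltac:(lia) (eps/2)) as [K2 HK2]. lra.
    exists (Nat.max K1 K2). intros k Hk. cbn [sum_up].
    specialize (HK1 k ltac:(lia)). specialize (HK2 k ltac:(lia)).
    replace (sum_up m (A k) + A k m - (sum_up m B + B m)) with
      ((sum_up m (A k) - sum_up m B) + (A k m - B m)) by ring.
    eapply Rle_lt_trans. apply Rabs_triang. lra. Qed.

Lemma phi_part n phi x M : (1 <= n)%nat -> is_basic_limit n phi -> (0 <= M)%Z ->
  Rabs x + 2 * INR n + 1 <= IZR M -> sumZ (- M) M (fun j => phi (x - IZR j)) = 1.
Proof. intros Hn Hb HM HxM. apply Rminus_diag_uniq. apply small_zero. intros eps He.
  set (A := fun k t => subdiv n k (Int_part (x * 2 ^ k) - 2 ^ Z.of_nat k * (- M + Z.of_nat t))%Z).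
  destruct (sum_up_approx (Z.to_nat (M - - M + 1)) A (fun t => phi (x - IZR (- M + Z.of_nat t))))
    with (eps := eps) as [K HK]; auto.
  - intros t _ e He'. destruct (approx n phi Hb (x - IZR (- M + Z.of_nat t)) e He') as [K HK].
    exists K. intros k Hk. rewrite Rabs_minus_sym. apply HK; auto.
    destruct (floor_prop x k) as [_ Hf]. rewrite minus_IZR, mult_IZR, <- pow2_IZR.
    replace (x - IZR (- M + Z.of_nat t) - (IZR (Int_part (x * 2 ^ k)) - 2 ^ k * IZR (- M + Z.of_nat t)) / 2 ^ k)
      with (x - IZR (Int_part (x * 2 ^ k)) / 2 ^ k) by (field; apply pow_nonzero; lra). auto.
  - specialize (HK K (le_n K)).
    assert (E : sum_up (Z.to_nat (M - - M + 1)) (A K) = 1).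
    { unfold A. fold (sumZ (-M) M (fun j => subdiv n K (Int_part (x * 2 ^ K) - 2 ^ Z.of_nat K * j)%Z)).
      apply part; auto. intros j Hj. apply sub_supp; auto.
      destruct (floor_prop x K) as [[H1 H2] _]. set (i := Int_part (x * 2 ^ K)) in *.
      rewrite pow2_IZR in *. set (P := (2 ^ Z.of_nat K)%Z) in *. pose proof (pow2pos K). fold P in H.
      assert (HP : 1 <= IZR P) by (apply IZR_le; lia).
      rewrite INR_IZR_INZ in HxM. set (nz := Z.of_nat n) in *.
      assert (Hi : (Z.abs i <= (M - 2 * nz - 1) * P + 1)%Z).
      { apply le_IZR. rewrite abs_IZR, plus_IZR, !mult_IZR, !minus_IZR, mult_IZR.
        assert (Rabs x * IZR P <= (IZR M - 2 * IZR nz - 1) * IZR P) by (apply Rmult_le_compat_r; lra).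
        destruct (Rle_dec 0 (IZR i)).
        - rewrite Rabs_right by lra. destruct (Rle_dec 0 x).
          + rewrite Rabs_right in H0 by lra. nra.
          + rewrite Rabs_left in H0 by lra. nra.
        - rewrite Rabs_left by lra. destruct (Rle_dec 0 x).
          + rewrite Rabs_right in H0 by lra. nra.
          + rewrite Rabs_left in H0 by lra. nra. }
      assert (HPj : (P * Z.abs j >= P * (M + 1))%Z) by (apply Z.le_ge, Z.mul_le_mono_nonneg_l; lia).
      assert (Z.abs (P * j) = P * Z.abs j)%Z by (rewrite Z.abs_mul; f_equal; lia).
      nia. }
    unfold sumZ. rewrite E in HK. rewrite Rabs_minus_sym. auto.
Qed.

Lemma series_fin (a : nat -> R) N : (forall k, (N <= k)%nat -> a k = 0) -> Series a = sum_up N a.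
Proof. intros Hz. apply is_series_unique.
  assert (Hs : forall m, sum_n a m = sum_up (S m) a).
  { induction m. rewrite sum_O. simpl. ring. rewrite sum_Sn, IHm. simpl. reflexivity. }
  assert (Hc : forall m, (N <= m)%nat -> sum_up m a = sum_up N a).
  { intros m Hm. induction Hm. auto. simpl. rewrite IHHm, Hz by lia. ring. }
  unfold is_series. apply (filterlim_ext_loc (fun _ => sum_up N a)).
  exists N. intros m Hm. rewrite Hs, (Hc (S m)) by lia. auto.
  apply filterlim_const. Qed.

Lemma sum_up_sym N (h : Z -> R) :
  sum_up N (fun k => h (Z.of_nat k) + h (- Z.of_nat k - 1)%Z) = sumZ (- Z.of_nat N) (Z.of_nat N - 1) h.
Proof. induction N.
  - simpl. rewrite sumZ_empty; auto. lia.
  - cbn [sum_up]. rewrite IHN.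
    replace (- Z.of_nat (S N))%Z with (- Z.of_nat N - 1)%Z by lia.
    replace (Z.of_nat (S N) - 1)%Z with (Z.of_nat N - 1 + 1)%Z by lia.
    rewrite sumZ_Sr by lia. rewrite sumZ_Sl by lia.
    replace (Z.of_nat N - 1 + 1)%Z with (Z.of_nat N) by lia. ring. Qed.

Lemma psi_eq n phi x M : (1 <= n)%nat -> is_basic_limit n phi -> (0 <= M)%Z ->
  Rabs x + 2 * INR n + 1 <= IZR M -> psi phi x = sumZ (- M) M (fun j => phi (x - IZR j) ^ 2).
Proof. intros Hn Hb HM HxM. unfold psi.
  rewrite (series_fin _ (S (Z.to_nat M))).
  - transitivity (sumZ (- Z.of_nat (S (Z.to_nat M))) (Z.of_nat (S (Z.to_nat M)) - 1) (fun j => phi (x - IZR j) ^ 2)).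
    + rewrite <- sum_up_sym. apply sum_up_ext.
      intros k _. rewrite <- INR_IZR_INZ. f_equal. f_equal. f_equal.
      rewrite minus_IZR, opp_IZR, <- INR_IZR_INZ. ring.
    + apply sumZ_zero_ext; try lia.
      intros j Hj. rewrite (phi_supp n phi); auto. simpl; ring.
      assert (HJ : (Z.abs j >= M + 1)%Z) by lia. apply Z.ge_le in HJ. apply IZR_le in HJ.
      rewrite abs_IZR, plus_IZR in HJ.
      pose proof (Rabs_triang_inv (IZR j) x). replace (x - IZR j) with (- (IZR j - x)) by ring.
      rewrite Rabs_Ropp. lra.
  - intros k Hk. assert (HK : IZR M + 1 <= INR k).
    { assert (EM : IZR M = INR (Z.to_nat M)) by (rewrite INR_IZR_INZ, Z2Nat.id by lia; reflexivity).
      rewrite EM, <- S_INR. apply le_INR. auto. }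
    rewrite (phi_supp n phi (x - INR k)), (phi_supp n phi (x + INR k + 1)); auto; try (simpl; ring).
    + pose proof (Rabs_triang_inv (INR k + 1) (- x)). rewrite Rabs_Ropp in H.
      replace (INR k + 1 - - x) with (x + INR k + 1) in H by ring.
      rewrite Rabs_right in H by (pose proof (pos_INR k); lra). lra.
    + pose proof (Rabs_triang_inv (INR k) x). replace (x - INR k) with (- (INR k - x)) by ring.
      rewrite Rabs_Ropp. rewrite Rabs_right in H by (pose proof (pos_INR k); lra). lra.
Qed.

Definition Mx n x := (up (Rabs x) + 2 * Z.of_nat n + 2)%Z.

Lemma Mx_prop n x : (0 <= Mx n x)%Z /\ Rabs x + 2 * INR n + 2 <= IZR (Mx n x).
Proof. destruct (archimed (Rabs x)) as [H1 _]. pose proof (Rabs_pos x).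
  assert (0 < IZR (up (Rabs x))) by lra. apply lt_IZR in H0. unfold Mx. split. lia.
  rewrite !plus_IZR, mult_IZR, <- INR_IZR_INZ. lra. Qed.

Lemma window n x M (g : Z -> R) : (1 <= n)%nat -> (0 <= M)%Z -> Rabs x + 2 * INR n + 1 <= IZR M ->
  (forall j, 2 * INR n <= Rabs (x - IZR j) -> g j = 0) ->
  sumZ (- M) M g = sumZ (Int_part x - 2 * Z.of_nat n + 1) (Int_part x - 2 * Z.of_nat n + 1 + 4 * Z.of_nat n - 1) g.
Proof. intros Hn HM HxM Hg. destruct (base_Int_part x) as [H1 H2]. set (ip := Int_part x) in *.
  rewrite INR_IZR_INZ in *. set (nz := Z.of_nat n) in *.
  assert (Hn' : (1 <= nz)%Z) by lia. assert (Hnz : 1 <= IZR nz) by (apply IZR_le; lia).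
  assert (Hl : (- M <= ip - 2 * nz + 1)%Z).
  { apply le_IZR. rewrite !plus_IZR, minus_IZR, mult_IZR, opp_IZR.
    pose proof (Rabs_pos x). pose proof (Rle_abs (-x)). rewrite Rabs_Ropp in H0. lra. }
  assert (Hr : (ip - 2 * nz + 1 + 4 * nz - 1 <= M)%Z).
  { apply le_IZR. rewrite !minus_IZR, !plus_IZR, minus_IZR, !mult_IZR.
    pose proof (Rle_abs x). lra. }
  apply sumZ_zero_ext; try lia. intros j Hj. apply Hg.
  destruct Hj as [Hj|Hj].
  - assert (j <= ip - 2 * nz)%Z by lia. apply IZR_le in H. rewrite minus_IZR, mult_IZR in H.
    rewrite Rabs_right; lra.
  - assert (ip + 2 * nz + 1 <= j)%Z by lia. apply IZR_le in H. rewrite !plus_IZR, mult_IZR in H.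
    rewrite Rabs_left; lra.
Qed.

Lemma psi_lower n phi x : (1 <= n)%nat -> is_basic_limit n phi -> / (4 * INR n) <= psi phi x.
Proof. intros Hn Hb. destruct (Mx_prop n x) as [HM HxM]. pose proof (INR_ge1 n Hn).
  rewrite (psi_eq n phi x (Mx n x)) by (auto; lra).
  pose proof (phi_part n phi x (Mx n x) Hn Hb HM ltac:(lra)) as Hp.
  rewrite (window n x (Mx n x)) in Hp; auto; try lra.
  2:{ intros j Hj. rewrite (phi_supp n phi); auto. }
  rewrite (window n x (Mx n x)); auto; try lra.
  2:{ intros j Hj. rewrite (phi_supp n phi); auto. simpl; ring. }
  pose proof (sumZ_CS (Int_part x - 2 * Z.of_nat n + 1) (Int_part x - 2 * Z.of_nat n + 1 + 4 * Z.of_nat n - 1) (fun j => phi (x - IZR j))) as HC.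
  rewrite Hp in HC.
  replace (Z.to_nat (Int_part x - 2 * Z.of_nat n + 1 + 4 * Z.of_nat n - 1 - (Int_part x - 2 * Z.of_nat n + 1) + 1)) with (4 * n)%nat in HC by lia.
  rewrite mult_INR in HC. simpl INR in HC.
  apply Rmult_le_reg_l with (4 * INR n). lra. rewrite Rinv_r by lra. lra. Qed.

Lemma psi_upper n phi x : (1 <= n)%nat -> is_basic_limit n phi -> psi phi x <= / (2 * INR n - 1).
Proof. intros Hn Hb. destruct (Mx_prop n x) as [HM HxM]. pose proof (INR_ge1 n Hn).
  rewrite (psi_eq n phi x (Mx n x)) by (auto; lra).
  pose proof (phi_part n phi x (Mx n x) Hn Hb HM ltac:(lra)) as Hp.
  rewrite <- (Rmult_1_r (/ _)). rewrite <- Hp. rewrite <- sumZ_scal. apply sumZ_le.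
  intros j _. pose proof (phi_nonneg n phi (x - IZR j) Hn Hb). pose proof (phi_le n phi (x - IZR j) Hn Hb).
  replace (phi (x - IZR j) ^ 2) with (phi (x - IZR j) * phi (x - IZR j)) by ring. apply Rmult_le_compat_r; auto. rewrite Hp; auto. Qed.

Lemma psi_nonneg n phi x : (1 <= n)%nat -> is_basic_limit n phi -> 0 <= psi phi x.
Proof. intros. pose proof (psi_lower n phi x H H0). pose proof (INR_ge1 n H).
  assert (0 < / (4 * INR n)) by (apply Rinv_0_lt_compat; lra). lra. Qed.

Lemma psi_symm n phi x : (1 <= n)%nat -> is_basic_limit n phi -> psi phi (- x) = psi phi x.
Proof. intros Hn Hb. destruct (Mx_prop n x) as [HM HxM].
  rewrite (psi_eq n phi x (Mx n x)) by (auto; lra).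
  rewrite (psi_eq n phi (-x) (Mx n x)) by (auto; rewrite Rabs_Ropp; lra).
  assert (R := sumZ_rev (- Mx n x) (Mx n x) (fun j => phi (x - IZR j) ^ 2)). cbv beta in R.
  rewrite Z.opp_involutive in R. rewrite <- R. apply sumZ_ext.
  intros j _. rewrite opp_IZR. rewrite <- (phi_sym n phi (x - - IZR j)) by auto.
  replace (- x - IZR j) with (- (x - - IZR j)) by ring. reflexivity. Qed.

Lemma psi_per n phi x : (1 <= n)%nat -> is_basic_limit n phi -> psi phi (x + 1) = psi phi x.
Proof. intros Hn Hb. destruct (Mx_prop n x) as [HM HxM].
  rewrite (psi_eq n phi x (Mx n x)) by (auto; lra).
  rewrite (psi_eq n phi (x + 1) (Mx n x + 1)).
  2: auto. 2: auto. 2: lia. 2:{ rewrite plus_IZR. pose proof (Rabs_triang x 1). rewrite Rabs_R1 in H. lra. }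
  assert (R := sumZ_shift (- (Mx n x + 1)) (Mx n x + 1) (-1) (fun j => phi (x - IZR j) ^ 2)). cbv beta in R.
  rewrite (sumZ_ext _ _ _ (fun j => phi (x - IZR (j + -1)) ^ 2)).
  2:{ intros j _. rewrite plus_IZR. f_equal. f_equal. ring. }
  rewrite R. apply sumZ_zero_ext; try lia.
  intros j Hj. rewrite (phi_supp n phi); auto. simpl; ring.
  assert (HJ : (Z.abs j >= Mx n x + 1)%Z) by lia. apply Z.ge_le in HJ. apply IZR_le in HJ.
  rewrite abs_IZR, plus_IZR in HJ.
  pose proof (Rabs_triang_inv (IZR j) x). replace (x - IZR j) with (- (IZR j - x)) by ring.
  rewrite Rabs_Ropp. lra. Qed.

Lemma cont_sum m (F : nat -> R -> R) : (forall t x, continuous (F t) x) ->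
  forall x, continuous (fun y => sum_up m (fun t => F t y)) x.
Proof. intros HF x. induction m.
  - simpl. apply (continuous_const (U := R_UniformSpace) (V := R_UniformSpace) 0).
  - apply (continuous_ext (fun y => plus (sum_up m (fun t => F t y)) (F m y))).
    intros; reflexivity. apply (@continuous_plus R_UniformSpace R_AbsRing R_NormedModule); auto. Qed.

Lemma cont_term (phi : R -> R) c : (forall x, continuous phi x) ->
  forall x, continuous (fun y => phi (y - c) ^ 2) x.
Proof. intros Hc x.
  apply (continuous_comp (fun y => y - c) (fun z => phi z ^ 2)).
  - apply (continuous_ext (fun y : R => minus y c)). intros; reflexivity.
    apply (@continuous_minus R_UniformSpace R_AbsRing R_NormedModule). apply continuous_id. apply continuous_const.
  - apply (continuous_ext (fun z : R => mult (phi z) (phi z))). intros; unfold mult; simpl; ring.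
    apply (@continuous_mult R_UniformSpace R_AbsRing); auto. Qed.

Lemma inv_bound n : (1 <= n)%nat -> / (2 * INR n - 1) <= 1 / INR n.
Proof. intros Hn. pose proof (INR_ge1 n Hn). unfold Rdiv. rewrite Rmult_1_l.
  apply Rinv_le_contravar; lra. Qed.

Theorem theorem6 (phi : nat -> R -> R)
  (Hphi : forall n : nat, (1 <= n)%nat -> is_basic_limit n (phi n)) :
  (forall n : nat, (1 <= n)%nat -> forall x : R, 0 < psi (phi n) x) /\
  (forall n : nat, (1 <= n)%nat -> forall x : R, psi (phi n) (- x) = psi (phi n) x) /\
  (forall n : nat, (1 <= n)%nat -> forall x : R, psi (phi n) (x + 1) = psi (phi n) x) /\
  (exists c1 c2 : R, 0 < c1 /\ 0 < c2 /\
     forall n : nat, (1 <= n)%nat ->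
       c1 / INR n <= RInt (psi (phi n)) 0 1 <= c2 / INR n) /\
  (exists C : R, forall n : nat, (1 <= n)%nat ->
     forall x : R, Rabs (psi (phi n) x) <= C / INR n).
Proof.
  split; [|split; [|split; [|split]]].
  - intros n Hn x. pose proof (psi_lower n (phi n) x Hn (Hphi n Hn)). pose proof (INR_ge1 n Hn).
    assert (0 < / (4 * INR n)) by (apply Rinv_0_lt_compat; lra). lra.
  - intros n Hn x. apply (psi_symm n); auto.
  - intros n Hn x. apply (psi_per n); auto.
  - exists (1/4), 1. split. lra. split. lra. intros n Hn.
    pose proof (INR_ge1 n Hn). pose proof (Hphi n Hn) as Hb.
    set (Mi := (2 * Z.of_nat n + 3)%Z).
    set (Gf := fun x => sumZ (- Mi) Mi (fun j => phi n (x - IZR j) ^ 2)).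
    assert (HG : forall x, 0 <= x <= 1 -> psi (phi n) x = Gf x).
    { intros x Hx. apply (psi_eq n); auto. unfold Mi; lia.
      unfold Mi. rewrite plus_IZR, mult_IZR, <- INR_IZR_INZ. rewrite Rabs_right by lra. lra. }
    assert (HexG : ex_RInt Gf 0 1).
    { apply (ex_RInt_continuous (V := R_CompleteNormedModule)). intros z _. unfold Gf, sumZ.
      apply (cont_sum _ (fun t y => phi n (y - IZR (- Mi + Z.of_nat t)) ^ 2)).
      intros t y. apply cont_term. apply Hb. }
    assert (Hex : ex_RInt (psi (phi n)) 0 1).
    { apply (ex_RInt_ext Gf). rewrite Rmin_left, Rmax_right by lra. intros x Hx.
      symmetry. apply HG. lra. auto. }
    split.
    + apply Rle_trans with (RInt (fun _ => / (4 * INR n)) 0 1).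
      rewrite RInt_const. unfold scal; simpl; unfold mult; simpl. right; field; lra.
      apply RInt_le; auto. lra. apply ex_RInt_const. intros x _. apply (psi_lower n); auto.
    + apply Rle_trans with (RInt (fun _ => 1 / INR n) 0 1).
      apply RInt_le; auto. lra. apply ex_RInt_const. intros x _.
      eapply Rle_trans. apply (psi_upper n); auto. apply inv_bound; auto.
      rewrite RInt_const. unfold scal; simpl; unfold mult; simpl. right; field; lra.
  - exists 1. intros n Hn x. rewrite Rabs_right.
    eapply Rle_trans. apply (psi_upper n); auto. apply inv_bound; auto.
    apply Rle_ge. apply (psi_nonneg n); auto.
Qed.
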